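(* There exists a constant $c>0$ and infinitely many pairs of integers $(n,\ell)$ with $1\le\ell<n$ such that $f(n,\ell)\ge c\,\frac{n}{\ell}\,\frac{\log n}{\log\log n}$. (For instance, one may take $n$ to be the product of the $k$ smallest primes and $\ell$ the smallest integer with $\pi(\ell)=k$.)
   Context: For integers $n\ge 2$ and $\ell\ge0$, a set $B\subseteq\mathbb{Z}_n$ is an $\ell$-covering set if $\{ab\bmod n: 0\le a\le\ell,\ b\in B\}=\mathbb{Z}_n$, and $f(n,\ell)$ is the minimum size of an $\ell$-covering set of $\mathbb{Z}_n$. $\pi$ is the prime counting function. Convention: $\log x$ denotes $\max(\ln x,1)$. *)

(* Defs.v *)
From mathcomp Require Import all_boot.
From Stdlib Require Import Reals.

Set Implicit Arguments.
Unset Strict Implicit.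
Unset Printing Implicit Defensive.

(* B ⊆ Z_n (elements represented by residues 0..n-1) is an l-covering set if
   { a*b mod n : 0 <= a <= l, b in B } = Z_n. *)
Definition covering (n l : nat) (B : {set 'I_n}) : bool :=
  [forall x : 'I_n, [exists a : 'I_l.+1, [exists b in B, (a * b) %% n == x]]].

(* f(n,l) = minimum size of an l-covering set of Z_n.  (Default value n when no
   covering set exists, which only happens for l = 0; irrelevant below.) *)
Definition fcov (n l : nat) : nat :=
  \big[minn/n]_(B : {set 'I_n} | covering l B) #|B|.

(* Convention of the paper: log x = max(ln x, 1). *)
Definition logm (x : R) : R := Rmax (ln x) 1.

(* Main.v *)
Require Import Defs.
From mathcomp Require Import all_boot.
From Stdlib Require Import Reals Lra.
From mathcomp Require Import zify.
Import ssrnat.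

Fixpoint PP (P : pred nat) (K : nat) : nat :=
  match K with
  | 0 => 1
  | k.+1 => if prime k.+1 && P k.+1 then k.+1 * PP P k else PP P k
  end.

Definition Pn K := PP predT K.

Lemma PP_gt0 (P : pred nat) K : 0 < PP P K.
Proof.
elim: K => //= k IH; case: ifP => // /andP[pr _].
by rewrite muln_gt0 IH prime_gt0.
Qed.

Lemma PP_primefac (P : pred nat) K q : prime q -> q %| PP P K -> q <= K.
Proof.
move=> prq; elim: K => [|k IH] /=.
  by rewrite dvdn1 => /eqP q1; move: prq; rewrite q1.
case: ifP => [/andP[pr _]|_] .
  rewrite Euclid_dvdM // => /orP[|/IH]; last by move=> h; apply: leqW.
  by rewrite dvdn_prime2 // => /eqP->.
by move=> /IH; apply: leqW.
Qed.

Lemma PP_coprime (P : pred nat) K p : prime p -> K < p -> coprime p (PP P K).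
Proof.
move=> prp lt; rewrite prime_coprime //; apply/negP => /(@PP_primefac P K p prp).
by rewrite leqNgt lt.
Qed.

Lemma PP_dvd (P : pred nat) K p : prime p -> p <= K -> P p -> p %| PP P K.
Proof.
move=> prp; elim: K => [|k IH] /=; first by rewrite leqn0 => /eqP p0; move: prp; rewrite p0.
rewrite leq_eqVlt => /orP[/eqP <-|]; first by rewrite prp => -> /=; apply: dvdn_mulr.
rewrite ltnS => le Pp; case: ifP => _; last exact: IH.
by apply: dvdn_mull; apply: IH.
Qed.

Lemma PP_dvd_all (P : pred nat) K m : 0 < m ->
  (forall p, prime p -> p <= K -> P p -> p %| m) -> PP P K %| m.
Proof.
move=> m0; elim: K => [|k IH] H /=; first exact: dvd1n.
have IH' : PP P k %| m by apply: IH => p pr le Pp; apply: H => //; apply: leqW.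
case: ifP => [/andP[pr Pk]|_] //.
rewrite Gauss_dvd ?PP_coprime // IH' andbT.
by apply: H.
Qed.

Lemma PP_split a K : Pn K = PP (fun p => p <= a) K * PP (fun p => a < p) K.
Proof.
elim: K => [|k IH] //=.
rewrite /Pn /=; case pr: (prime k.+1) => /=; last by [].
case: (leqP k.+1 a) => h /=; rewrite -/(Pn k) IH.
  by rewrite mulnA.
by rewrite mulnCA.
Qed.

Lemma bin_le2 n m : 'C(n, m) <= 2 ^ n.
Proof.
elim: n m => [|n IH] m; first by case: m.
case: m => [|m]; first by rewrite bin0 expn_gt0.
by rewrite binS expnS mul2n -addnn leq_add.
Qed.

Lemma prime_dvd_fact p k : prime p -> p %| k`! -> p <= k.
Proof.
move=> prp; elim: k => [|k IH]; first by rewrite dvdn1 => /eqP p1; move: prp; rewrite p1.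
rewrite factS Euclid_dvdM // => /orP[/dvdn_leq|/IH]; first exact.
by move=> h; apply: leqW.
Qed.

Lemma Pr_dvd_bin m : PP (fun p => m.+1 < p) (m.*2.+1) %| 'C(m.*2.+1, m).
Proof.
rewrite -addnn.
apply: PP_dvd_all; first by rewrite bin_gt0 leqW // leq_addr.
move=> p prp le lt.
have hf := bin_fact (leqW (leq_addr m m)).
have e : (m + m).+1 - m = m.+1 by lia.
rewrite e in hf.
have : p %| (m + m).+1`! by apply: dvdn_fact; rewrite prime_gt0.
rewrite -hf Euclid_dvdM // Euclid_dvdM // => /orP[//|/orP[/(@prime_dvd_fact p _ prp)|/(@prime_dvd_fact p _ prp)]] h.
  by move: lt; rewrite ltnNge (leq_trans h (leqnSn _)).
by move: lt; rewrite ltnNge h.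
Qed.

Lemma Pn_notprime k : ~~ prime k.+1 -> Pn k.+1 = Pn k.
Proof. by move=> /negbTE h; rewrite /Pn /= h. Qed.

Lemma Pn_prime k : prime k.+1 -> Pn k.+1 = k.+1 * Pn k.
Proof. by move=> h; rewrite /Pn /= h. Qed.

Lemma PPle_le a K : PP (fun p => p <= a) K <= Pn a.
Proof.
apply: dvdn_leq; first exact: PP_gt0.
apply: PP_dvd_all; first exact: PP_gt0.
by move=> p prp _ pa; apply: PP_dvd.
Qed.

Lemma exp8 x : 8 ^ x = 2 ^ (3 * x).
Proof. by rewrite expnM. Qed.

Lemma cheb K : Pn K <= 8 ^ K.
Proof.
elim/ltn_ind: K => K IH.
case: K IH => [|[|[|K]]] IH; [by [] | by [] | by [] |].
have hK := odd_double_half K.+3.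
set m := K.+3./2 in hK.
case oK: (odd K.+3) hK => /= hK.
- have m1 : 1 <= m by lia.
  have -> : K.+3 = m.*2.+1 by lia.
  rewrite (PP_split m.+1).
  have hb : 0 < 'C(m.*2.+1, m) by rewrite bin_gt0; lia.
  apply: (leq_trans (leq_mul (PPle_le _ _) (dvdn_leq hb (Pr_dvd_bin m)))).
  have h1 : Pn m.+1 <= 8 ^ m.+1 by apply: IH; lia.
  apply: (leq_trans (leq_mul h1 (bin_le2 _ _))).
  rewrite exp8 exp8 -expnD leq_exp2l //; lia.
- have hK' : K.+3 = (K.+2).+1 by [].
  rewrite Pn_notprime.
    apply: (leq_trans (IH _ (ltnSn _))).
    by rewrite leq_exp2l.
  apply/negP => pr.
  have h2 : 2 %| K.+3 by rewrite dvdn2; move: oK => /= ->.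
  move: h2; rewrite dvdn_prime2 //; lia.
Qed.

Lemma totient_card n : totient n = #|[set x : 'I_n | coprime n x]|.
Proof.
rewrite totient_count_coprime big_mkord -sum1dep_card big_mkcond /=.
by rewrite [RHS]big_mkcond; apply: eq_bigr => i _; case: coprime.
Qed.

Lemma Pn_ge2 K : 2 <= K -> 2 <= Pn K.
Proof.
move=> K2; apply: dvdn_leq; first exact: PP_gt0.
by apply: PP_dvd.
Qed.

Lemma fcov_ge K : 2 <= K -> totient (Pn K) <= fcov (Pn K) K.
Proof.
move=> K2; have n2 := @Pn_ge2 K K2.
rewrite /fcov; apply: (big_ind (fun x => totient (Pn K) <= x)).
- by rewrite totient_card; apply: (leq_trans (max_card _)); rewrite card_ord.
- by move=> x y hx hy; rewrite leq_min hx hy.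
move=> B cov; rewrite totient_card; apply: subset_leq_card.
apply/subsetP => x; rewrite inE => cx.
move/forallP: cov => /(_ x) /existsP [a /existsP [b /andP [bB /eqP e]]].
move: cx; rewrite coprime_sym -e coprime_modl coprimeMl => /andP[ca _].
have a1 : nat_of_ord a = 1.
  case: (ltngtP a 1) => // h.
  - have a0 : nat_of_ord a = 0 by lia.
    move: ca; rewrite a0 /coprime gcd0n; lia.
  - have pp := pdiv_prime h.
    have hd : pdiv a %| Pn K.
      apply: PP_dvd => //; apply: (leq_trans (pdiv_leq _)); first lia.
      by rewrite -ltnS.
    move: (coprime_dvdl (pdiv_dvd a) ca); rewrite prime_coprime // hd //.
move: e; rewrite a1 mul1n modn_small // => e.
by have -> : x = b by apply: val_inj.
Qed.

Fixpoint Ph (K : nat) : nat :=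
  match K with
  | 0 => 1
  | k.+1 => if prime k.+1 then k * Ph k else Ph k
  end.

Lemma totient_Pn K : totient (Pn K) = Ph K.
Proof.
elim: K => [|k IH]; first by [].

case pr: (prime k.+1).
- rewrite Pn_prime // totient_coprime; last by apply: PP_coprime.
  by rewrite totient_prime // IH /= pr.
- by rewrite Pn_notprime ?pr // IH /= pr.
Qed.

Fixpoint Qf (K M : nat) : nat :=
  match K with
  | 0 => 1
  | k.+1 => if prime k.+1 then k.+1 ^ (M %/ k.+1) * Qf k M else Qf k M
  end.

Lemma Qf_gt0 K M : 0 < Qf K M.
Proof. by elim: K => //= k IH; case: ifP => // pr; rewrite muln_gt0 IH expn_gt0 prime_gt0. Qed.

Lemma Qf_primefac K M q : prime q -> q %| Qf K M -> q <= K.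
Proof.
move=> prq; elim: K => [|k IH] /=.
  by rewrite dvdn1 => /eqP q1; move: prq; rewrite q1.
case: ifP => [pr|_] .
  rewrite Euclid_dvdM // => /orP[|/IH]; last by move=> h; apply: leqW.
  by rewrite Euclid_dvdX // dvdn_prime2 // => /andP[/eqP-> _].
by move=> /IH; apply: leqW.
Qed.

Lemma pe_dvd_fact p M : prime p -> p ^ (M %/ p) %| M`!.
Proof.
move=> prp; rewrite pfactor_dvdn ?fact_gt0 // logn_fact //.
case: M => [|M]; first by rewrite div0n.
by rewrite big_ltn // expn1 leq_addr.
Qed.

Lemma Qf_dvd K M : Qf K M %| M`!.
Proof.
elim: K => [|k IH] /=; first exact: dvd1n.
case: ifP => // pr.
rewrite Gauss_dvd ?IH ?pe_dvd_fact ?andbT //.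
apply: coprimeXl; rewrite prime_coprime //; apply/negP => /(@Qf_primefac k M _ pr).
by rewrite ltnn.
Qed.

Open Scope R_scope.

Lemma INR_muln m n : INR (m * n)%N = INR m * INR n.
Proof. exact: mult_INR. Qed.

Lemma INR_addn m n : INR (m + n)%N = INR m + INR n.
Proof. exact: plus_INR. Qed.

Lemma INR_expn m n : INR (m ^ n)%N = INR m ^ n.
Proof. elim: n => [|n IH]; first by rewrite expn0. by rewrite expnS INR_muln IH. Qed.

Lemma INR_gt0 n : (0 < n)%N -> 0 < INR n.
Proof. by move=> h; apply: lt_0_INR; apply/ltP. Qed.

Lemma INR_leq m n : (m <= n)%N -> INR m <= INR n.
Proof. by move=> h; apply: le_INR; apply/leP. Qed.

Lemma ln_le' x y : 0 < x -> x <= y -> ln x <= ln y.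
Proof.
move=> hx hxy; case: (Rle_lt_or_eq_dec _ _ hxy) => h.
  by left; apply: ln_increasing.
by rewrite h; right.
Qed.

Lemma ln_le_sub1 x : 0 < x -> ln x <= x - 1.
Proof.
move=> hx; have := exp_ineq1_le (ln x); rewrite exp_ln //; lra.
Qed.

Lemma ln_divR u v : 0 < u -> 0 < v -> ln (u / v) = ln u - ln v.
Proof.
move=> hu hv; have hv' : 0 < / v by apply: Rinv_0_lt_compat.
rewrite /Rdiv ln_mult // ln_Rinv //; lra.
Qed.

Fixpoint Th (K : nat) : R := match K with 0%N => 0 | k.+1 =>
  (if prime k.+1 then ln (INR k.+1) else 0) + Th k end.
Fixpoint Ar (K : nat) : R := match K with 0%N => 0 | k.+1 =>
  (if prime k.+1 then ln (INR k.+1) / INR k.+1 else 0) + Ar k end.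
Fixpoint Tr (K : nat) : R := match K with 0%N => 0 | k.+1 =>
  (if prime k.+1 then / INR k.+1 else 0) + Tr k end.
Fixpoint Lr (K : nat) : R := match K with 0%N => 0 | k.+1 =>
  (if prime k.+1 then ln (INR k.+1) - ln (INR k) else 0) + Lr k end.
Fixpoint Br (K M : nat) : R := match K with 0%N => 0 | k.+1 =>
  (if prime k.+1 then INR (M %/ k.+1) * ln (INR k.+1) else 0) + Br k M end.

Lemma Th_ln K : Th K = ln (INR (Pn K)).
Proof.
elim: K => [|k IH]; first by rewrite /= ln_1.
rewrite /=; case pr: (prime k.+1).
- rewrite Pn_prime // INR_muln ln_mult ?IH //; apply: INR_gt0 => //; exact: PP_gt0.
- by rewrite Pn_notprime ?pr // IH; lra.
Qed.

Lemma Th_le K : Th K <= INR K * ln (INR 8).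
Proof.
rewrite Th_ln -ln_pow; last by apply: INR_gt0.
rewrite -INR_expn; apply: ln_le'; first by apply: INR_gt0; exact: PP_gt0.
by apply: INR_leq; apply: cheb.
Qed.

Lemma Br_ln K M : Br K M = ln (INR (Qf K M)).
Proof.
elim: K => [|k IH]; first by rewrite /= ln_1.
rewrite /=; case pr: (prime k.+1).
- rewrite INR_muln ln_mult ?IH ?INR_expn ?ln_pow //.
  + by apply: INR_gt0.
  + by apply: pow_lt; apply: INR_gt0.
  + by apply: INR_gt0; apply: Qf_gt0.
- lra.
Qed.

Lemma lnfact M : ln (INR M`!) <= INR M * ln (INR M).
Proof.
elim: M => [|M IH]; first by rewrite /= ln_1; lra.
rewrite factS INR_muln ln_mult; last by apply: INR_gt0; apply: fact_gt0.
  2: by apply: INR_gt0.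
rewrite S_INR -S_INR.
case: M IH => [|M] IH.
  by rewrite /= ln_1; lra.
have : ln (INR M.+1) <= ln (INR M.+2).
  by apply: ln_le'; [apply: INR_gt0|apply: INR_leq].
have : 0 <= INR M.+1 by apply: pos_INR.
rewrite [INR M.+2]S_INR.
nra.
Qed.

Lemma Th_S k : Th k.+1 = (if prime k.+1 then ln (INR k.+1) else 0) + Th k.
Proof. by []. Qed.
Lemma Ar_S k : Ar k.+1 = (if prime k.+1 then ln (INR k.+1) / INR k.+1 else 0) + Ar k.
Proof. by []. Qed.
Lemma Tr_S k : Tr k.+1 = (if prime k.+1 then / INR k.+1 else 0) + Tr k.
Proof. by []. Qed.
Lemma Lr_S k : Lr k.+1 = (if prime k.+1 then ln (INR k.+1) - ln (INR k) else 0) + Lr k.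
Proof. by []. Qed.
Lemma Br_S k M : Br k.+1 M =
  (if prime k.+1 then INR (M %/ k.+1) * ln (INR k.+1) else 0) + Br k M.
Proof. by []. Qed.

Lemma ln_nat_ge0 n : (0 < n)%N -> 0 <= ln (INR n).
Proof.
move=> h; rewrite -ln_1; apply: ln_le'; first lra.
by apply: (INR_leq 1).
Qed.

Lemma Br_ge K M : INR M * Ar K - Th K <= Br K M.
Proof.
elim: K => [|k IH]; first by rewrite /=; lra.
rewrite Br_S Ar_S Th_S; case pr: (prime k.+1); last lra.
suff : INR M * (ln (INR k.+1) / INR k.+1) - ln (INR k.+1) <=
       INR (M %/ k.+1) * ln (INR k.+1) by lra.
have hp : 0 < INR k.+1 by apply: INR_gt0.
have hl : 0 <= ln (INR k.+1) by apply: ln_nat_ge0.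
have e := divn_eq M k.+1.
have hr : (M %% k.+1 < k.+1)%N by apply: ltn_pmod.
have eR : INR M = INR (M %/ k.+1) * INR k.+1 + INR (M %% k.+1).
  by rewrite {1}e INR_addn INR_muln.
have hrR : INR (M %% k.+1) <= INR k.+1 by apply: INR_leq; apply: ltnW.
have h : INR M / INR k.+1 - 1 <= INR (M %/ k.+1).
  have -> : INR M / INR k.+1 - 1 = INR (M %/ k.+1) + (INR (M %% k.+1) - INR k.+1) / INR k.+1.
    by rewrite eR; field; lra.
  have : (INR (M %% k.+1) - INR k.+1) / INR k.+1 <= 0.
    rewrite /Rdiv; have := Rinv_0_lt_compat _ hp; nra.
  lra.
have -> : INR M * (ln (INR k.+1) / INR k.+1) - ln (INR k.+1) =
    (INR M / INR k.+1 - 1) * ln (INR k.+1) by field; lra.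
by apply: Rmult_le_compat_r.
Qed.

Definition C8 := ln (INR 8).

Lemma Ar_le K : (1 <= K)%N -> Ar K <= ln (INR K) + C8.
Proof.
move=> K1.
have h1 := Br_ge K K.
have h2 : Br K K <= ln (INR K`!).
  rewrite Br_ln; apply: ln_le'; first by apply: INR_gt0; apply: Qf_gt0.
  by apply: INR_leq; apply: dvdn_leq; [apply: fact_gt0|apply: Qf_dvd].
have h3 := lnfact K.
have h4 := Th_le K.
have hK : 0 < INR K by apply: INR_gt0.
rewrite /C8.
apply: (Rmult_le_reg_l (INR K)) => //.
lra.
Qed.

Lemma ln_gt0_nat n : (2 <= n)%N -> 0 < ln (INR n).
Proof.
move=> h; rewrite -ln_1; apply: ln_increasing; first lra.
have := INR_leq 2 n h; rewrite /=; lra.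
Qed.

Lemma abel j :
  Tr j.+2 - Ar j.+2 / ln (INR j.+2) <=
  ln (ln (INR j.+2)) - ln (ln (INR 2)) + C8 * (/ ln (INR 2) - / ln (INR j.+2)).
Proof.
elim: j => [|j IH].
  have -> : Tr 2 = / INR 2 by rewrite /= ; lra.
  have -> : Ar 2 = ln (INR 2) / INR 2 by rewrite /=; lra.
  have := ln_gt0_nat 2 (leqnn 2) => h.
  have h2 : 0 < INR 2 by apply: INR_gt0.
  have -> : / INR 2 - ln (INR 2) / INR 2 / ln (INR 2) = 0 by field; lra.
  lra.
set u := ln (INR j.+2) in IH *.
set v := ln (INR j.+3).
have hu : 0 < u by apply: ln_gt0_nat.
have hv : 0 < v by apply: ln_gt0_nat.
have huv : u <= v by apply: ln_le'; [apply: INR_gt0|apply: INR_leq].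
have eq : Tr j.+3 - Ar j.+3 / v = Tr j.+2 - Ar j.+2 / v.
  rewrite Tr_S Ar_S; case: (prime j.+3).
    have : 0 < INR j.+3 by apply: INR_gt0.
    rewrite -/v => h; field; split; lra.
  lra.
rewrite eq.
have hA := Ar_le j.+2 isT; rewrite -/u in hA.
have hw : 0 <= / u - / v.
  have : / v <= / u by apply: Rinv_le_contravar.
  lra.
have h1 : Ar j.+2 * (/ u - / v) <= (u + C8) * (/ u - / v)
  by apply: Rmult_le_compat_r.
have h2 : 1 - u / v <= ln v - ln u.
  have := ln_le_sub1 (u / v) ltac:(apply: Rdiv_lt_0_compat).
  rewrite ln_divR //; lra.
have e2 : (u + C8) * (/ u - / v) = 1 - u / v + C8 * (/ u - / v) by field; lra.
have e3 : Tr j.+2 - Ar j.+2 / v = (Tr j.+2 - Ar j.+2 / u) + Ar j.+2 * (/ u - / v)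
  by rewrite /Rdiv; ring.
rewrite e3.
lra.
Qed.

Lemma Lr_le j : Lr j.+1 <= Tr j.+1 + 1 - / INR j.+1.
Proof.
elim: j => [|j IH].
  have p1 : prime 1 = false by [].
  have -> : Lr 1 = 0 by rewrite Lr_S p1 /=; lra.
  have -> : Tr 1 = 0 by rewrite Tr_S p1 /=; lra.
  rewrite /= Rinv_1; lra.
have h1 : 0 < INR j.+1 by apply: INR_gt0.
have h2 : 0 < INR j.+2 by apply: INR_gt0.
have h12 : INR j.+1 <= INR j.+2 by apply: INR_leq.
rewrite Lr_S Tr_S; case: (prime j.+2).
- have := ln_le_sub1 (INR j.+2 / INR j.+1) ltac:(apply: Rdiv_lt_0_compat => //).
  rewrite ln_divR //.
  have -> : INR j.+2 / INR j.+1 - 1 = / INR j.+1.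
    rewrite [INR j.+2]S_INR; field; lra.
  lra.
- have : / INR j.+2 <= / INR j.+1 by apply: Rinv_le_contravar.
  lra.
Qed.

Lemma Ph_gt0 K : (0 < Ph K)%N.
Proof.
elim: K => //= k IH; case: ifP => // pr.
rewrite muln_gt0 IH andbT; have := prime_gt1 pr; lia.
Qed.

Lemma Lr_ln K : ln (INR (Pn K)) - ln (INR (Ph K)) = Lr K.
Proof.
elim: K => [|k IH]; first by rewrite /= ln_1; lra.
rewrite Lr_S; case pr: (prime k.+1).
- have k0 : (0 < k)%N by have := prime_gt1 pr; lia.
  rewrite Pn_prime // [Ph k.+1]/= pr !INR_muln !ln_mult.
  + rewrite -IH; lra.
  + by apply: INR_gt0.
  + by apply: INR_gt0; apply: Ph_gt0.
  + by apply: INR_gt0.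
  + by apply: INR_gt0; apply: PP_gt0.
- by rewrite Pn_notprime ?pr // [Ph k.+1]/= pr; lra.
Qed.

Lemma exp_le' x y : x <= y -> exp x <= exp y.
Proof.
move=> h; case: (Rle_lt_or_eq_dec _ _ h) => h'.
  by left; apply: exp_increasing.
by rewrite h'; right.
Qed.

Lemma exp_e_le : exp (exp 1) <= 27.
Proof.
have h3 := exp_le_3.
have hpos : 0 < exp 1 by apply: exp_pos.
apply: (Rle_trans _ (exp 3)); first by apply: exp_le'.
have -> : (3 = 1 + 1 + 1)%R by ring.
rewrite !exp_plus.
have : exp 1 * exp 1 <= 9 by nra.
nra.
Qed.

Lemma mono y Y : 1 <= ln y -> y <= Y -> y / ln y <= Y / ln Y.
Proof.
move=> hy hyY.
have y0 : 0 < y.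
  case: (Rlt_le_dec 0 y) => // h.
  (* ln of nonpositive: ln is defined as 0 there? use contradiction *)
  rewrite /ln in hy; case: (Rlt_dec 0 y) hy => // _; lra.
have Y0 : 0 < Y by lra.
have hlY : ln y <= ln Y by apply: ln_le'.
have h1 := ln_le_sub1 (Y / y) ltac:(apply: Rdiv_lt_0_compat => //).
rewrite ln_divR // in h1.
have h2 : y * (ln Y - ln y) <= Y - y.
  have -> : Y - y = y * (Y / y - 1) by field; lra.
  by apply: Rmult_le_compat_l; lra.
have h3 : Y - y <= (Y - y) * ln y by nra.
have -> : y / ln y = Y / ln Y + (y * ln Y - Y * ln y) * / (ln y * ln Y) by field; lra.
have : 0 < / (ln y * ln Y) by apply: Rinv_0_lt_compat; nra.
nra.
Qed.

Lemma C8_ge1 : 1 <= C8.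
Proof.
rewrite /C8 -(ln_exp 1); apply: ln_le'; first by apply: exp_pos.
have := exp_le_3; have : INR 3 <= INR 8 by apply: INR_leq.
rewrite [INR 3]/=; lra.
Qed.

Close Scope R_scope.

Theorem mainTheorem12 :
  exists c : R, (0 < c)%R /\
    forall N : nat, exists n l : nat,
      (N < n)%N /\ (2 <= n)%N /\ (1 <= l)%N /\ (l < n)%N /\
      (c * (INR n / INR l) * (logm (INR n) / logm (logm (INR n)))
         <= INR (fcov n l))%R.
Proof.
pose E := (2 - ln (ln (INR 2)) + C8 / ln (INR 2))%R.
have hC8 := C8_ge1.
exists (exp (- E) / C8)%R; split.
  by apply: Rdiv_lt_0_compat; [apply: exp_pos | lra].
move=> N; have [K ltK prK] := prime_above (maxn N 27).
have K28 : (28 <= K)%N by move: ltK; rewrite gtn_max => /andP[_ ->].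
have KN : (N < K)%N by move: ltK; rewrite gtn_max => /andP[->].
have eK : K = K.-1.+1 by lia.
have ePn : Pn K = (K * Pn K.-1)%N by rewrite {1}eK Pn_prime -?eK.
have h2 : (2 <= Pn K.-1)%N by apply: Pn_ge2; lia.
have KP : (K < Pn K)%N by rewrite ePn; nia.
exists (Pn K), K.
split; first lia.
split; first lia.
split; first lia.
split; first lia.
Open Scope R_scope.
set n := INR (Pn K).
have n0 : 0 < n by apply: INR_gt0; lia.
have hn : exp (exp 1) <= n.
  apply: (Rle_trans _ _ _ exp_e_le).
  have : INR 28 <= n by apply: INR_leq; lia.
  rewrite !S_INR INR_0; lra.
set y := ln n.
have e1 : 1 <= exp 1 by have := exp_ineq1_le 1; lra.
have hy : exp 1 <= y by rewrite /y -(ln_exp (exp 1)); apply: ln_le' => //; apply: exp_pos.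
have lny : 1 <= ln y by rewrite -(ln_exp 1); apply: ln_le' => //; apply: exp_pos.
have -> : logm n = y by rewrite /logm -/y Rmax_left //; lra.
have -> : logm y = ln y by rewrite /logm Rmax_left //; lra.
have K0 : 0 < INR K by apply: INR_gt0; lia.
set u := ln (INR K).
have u0 : 0 < u by apply: ln_gt0_nat; lia.
have hyY : y <= INR K * C8 by rewrite /y /n -Th_ln; apply: Th_le.
have hq := mono y (INR K * C8) lny hyY.
have lnY : u <= ln (INR K * C8).
  rewrite ln_mult //; last lra.
  have : 0 <= ln C8 by rewrite -ln_1; apply: ln_le'; lra.
  rewrite /u; lra.
have hq2 : y / ln y <= INR K * C8 / u.
  apply: (Rle_trans _ _ _ hq); apply: Rmult_le_compat_l; first nra.
  by apply: Rinv_le_contravar.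
pose a := exp (- E).
have a0 : 0 < a by apply: exp_pos.
apply: (Rle_trans _ (a * n / u)).
  apply: (Rle_trans _ (exp (- E) / C8 * (n / INR K) * (INR K * C8 / u))).
    have pos : 0 < exp (- E) / C8 * (n / INR K).
      apply: Rmult_lt_0_compat; apply: Rdiv_lt_0_compat => //; lra.
    by apply: Rmult_le_compat_l; [lra|].
  rewrite /a; right; field; lra.
have hfc : INR (Ph K) <= INR (fcov (Pn K) K).
  by apply: INR_leq; rewrite -totient_Pn; apply: fcov_ge; lia.
apply: (Rle_trans _ _ _ _ hfc).
have ePh : INR (Ph K) = n * exp (- Lr K).
  rewrite -(Lr_ln K) -/n.
  have ph0 : 0 < INR (Ph K) by apply: INR_gt0; apply: Ph_gt0.
  rewrite Ropp_minus_distr exp_plus exp_Ropp !exp_ln //; field; lra.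
rewrite ePh.
have hL : Lr K <= ln u + E.
  have eK2 : (K.-2).+2 = K by lia.
  have hab := abel K.-2; rewrite eK2 -/u in hab.
  have hLr := Lr_le K.-1; rewrite -eK in hLr.
  have hAr := Ar_le K ltac:(lia); rewrite -/u in hAr.
  have hinvK : 0 < / INR K by apply: Rinv_0_lt_compat.
  have hAu : Ar K / u <= 1 + C8 / u.
    have -> : 1 + C8 / u = (u + C8) / u by field; lra.
    apply: Rmult_le_compat_r => //; left; apply: Rinv_0_lt_compat => //.
  have hinvu : 0 < / u by apply: Rinv_0_lt_compat.
  rewrite /E; rewrite /Rdiv in hab hAu *; nra.
have hexp : a * / u <= exp (- Lr K).
  rewrite /a -(exp_ln u) // -exp_Ropp -exp_plus; apply: exp_le'; lra.
have : a * n / u = n * (a * / u) by rewrite /Rdiv; ring.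
move=> ->; apply: Rmult_le_compat_l; lra.
Qed.
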